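(* Consider the network system of the context and assume every subsystem $G_i\in\mathcal{RH}_\infty$. Then the entire network system (subsystems $G_1,\dots,G_N$, interaction $\boldsymbol v=\boldsymbol L\boldsymbol w$, decentralized controller $u_i=K_iy_i$) is internally stable for every interaction $\boldsymbol L$ such that the preexisting system $\boldsymbol G_{\rm pre}$ is internally stable if and only if each $K_i$, $i=1,\dots,N$, is a retrofit controller for $G_i$, i.e. (equivalently) $K_i=(I+Q_iG_{y_iu_i})^{-1}Q_i$ for some $Q_i\in\mathcal{RH}_\infty$ with $G_{w_iu_i}Q_iG_{y_iv_i}=0$.
   Context: For $i=1,\dots,N$, subsystem $G_i$ is a proper real rational transfer matrix with inputs $(v_i,d_i,u_i)$ and outputs $(w_i,z_i,y_i)$, $G_{a_ib_i}$ denoting the block from $b_i$ to $a_i$. Stacked signals $\boldsymbol v=\mathrm{col}(v_1,\dots,v_N)$ etc.; the interaction is $\boldsymbol v=\boldsymbol L\boldsymbol w$ with $\boldsymbol L=[L_{ij}]$ an arbitrary proper real rational (possibly dynamic) transfer matrix; the decentralized controller is $\boldsymbol u=\boldsymbol K\boldsymbol y$, $\boldsymbol K=\mathrm{diag}(K_1,\dots,K_N)$. Let $\boldsymbol G_{\boldsymbol{wv}}:=\mathrm{diag}(G_{w_iv_i})$ and similarly for other blocks. The preexisting system $\boldsymbol G_{\rm pre}$ is the loop $\boldsymbol w=\boldsymbol G_{\boldsymbol{wv}}\boldsymbol v$, $\boldsymbol v=\boldsymbol L\boldsymbol w$. All feedback systems are well-posed; internal stability is standard. $\mathcal{RH}_\infty$: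 stable proper real rational transfer matrices. For a single subsystem $G$ (inputs $v,d,u$; outputs $w,z,y$), a controller $u=Ky$ is a retrofit controller if the feedback system of $G$, $u=Ky$, and $v=\overline{G}w$ is internally stable for every proper real rational $\overline{G}$ such that the loop $w=G_{wv}v$, $v=\overline{G}w$ is internally stable. *)

(* Defs.v *)
From HB Require Import structures.
From mathcomp Require Import all_boot all_order all_algebra.
From mathcomp Require Import fraction.
Set Implicit Arguments. Unset Strict Implicit. Unset Printing Implicit Defensive.
Import Order.TTheory GRing.Theory Num.Theory.
Local Open Scope ring_scope.

(* Transfer functions: elements of the field of rational functions C(s),
   C an algebraically closed numeric field (model of the complex numbers). *)
Definition tf (C : numClosedFieldType) := {fraction {poly C}}.

Notation "x %:F" := (@FracField.tofrac _ x) : ring_scope.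

Definition realpoly (C : numClosedFieldType) (p : {poly C}) : Prop :=
  forall k, p`_k \is Num.real.

Definition prr (C : numClosedFieldType) (f : tf C) : Prop :=
  exists p q : {poly C}, [/\ q != 0, realpoly p, realpoly q,
    (size p <= size q)%N & f = (p%:F) / (q%:F)].

Definition RH (C : numClosedFieldType) (f : tf C) : Prop :=
  exists p q : {poly C}, [/\ q != 0, realpoly p /\ realpoly q,
    (size p <= size q)%N,
    (forall z : C, root q z -> 'Re z < 0) & f = (p%:F) / (q%:F)].

Definition mx_prr (C : numClosedFieldType) m n (A : 'M[tf C]_(m, n)) : Prop :=
  forall i j, prr (A i j).
Definition mx_RH (C : numClosedFieldType) m n (A : 'M[tf C]_(m, n)) : Prop :=
  forall i j, RH (A i j).

(* Internal stability (incl. well-posedness) of the loop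
   y = P (u + e_u), u = K (y + e_y):
   all maps (e_u, e_y) -> (u, y) are in RH_infinity. *)
Definition loop_stable (C : numClosedFieldType) (a b : nat)
  (P : 'M[tf C]_(a, b)) (K : 'M[tf C]_(b, a)) : Prop :=
  let S := invmx (1%:M - K *m P) in
  [/\ (1%:M - K *m P) \in unitmx,
      mx_RH (S *m K *m P), mx_RH (S *m K),
      mx_RH (P + P *m S *m K *m P) & mx_RH (P *m S *m K)].

(* Internal stability (incl. well-posedness) of the generalized plant
   [z; y] = [P11 P12; P21 P22] [d; u + e_u] with u = K (y + e_y):
   all maps (d, e_u, e_y) -> (z, y, u) are in RH_infinity. *)
Definition lft_stable (C : numClosedFieldType) (nz nd ny nu : nat)
  (P11 : 'M[tf C]_(nz, nd)) (P12 : 'M[tf C]_(nz, nu))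
  (P21 : 'M[tf C]_(ny, nd)) (P22 : 'M[tf C]_(ny, nu))
  (K : 'M[tf C]_(nu, ny)) : Prop :=
  let S := invmx (1%:M - K *m P22) in
  [/\ (1%:M - K *m P22) \in unitmx,
      [/\ mx_RH (S *m K *m P21), mx_RH (S *m K *m P22) & mx_RH (S *m K)],
      [/\ mx_RH (P21 + P22 *m S *m K *m P21), mx_RH (P22 + P22 *m S *m K *m P22) &
          mx_RH (P22 *m S *m K)] &
      [/\ mx_RH (P11 + P12 *m S *m K *m P21), mx_RH (P12 + P12 *m S *m K *m P22) &
          mx_RH (P12 *m S *m K)]].

Record subsys (C : numClosedFieldType) (nv nd nu nw nz ny : nat) := Subsys {
  Gwv : 'M[tf C]_(nw, nv); Gwd : 'M[tf C]_(nw, nd); Gwu : 'M[tf C]_(nw, nu);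
  Gzv : 'M[tf C]_(nz, nv); Gzd : 'M[tf C]_(nz, nd); Gzu : 'M[tf C]_(nz, nu);
  Gyv : 'M[tf C]_(ny, nv); Gyd : 'M[tf C]_(ny, nd); Gyu : 'M[tf C]_(ny, nu) }.

Definition subsys_RH (C : numClosedFieldType) nv nd nu nw nz ny
  (G : subsys C nv nd nu nw nz ny) : Prop :=
  [/\ [/\ mx_RH (Gwv G), mx_RH (Gwd G) & mx_RH (Gwu G)],
      [/\ mx_RH (Gzv G), mx_RH (Gzd G) & mx_RH (Gzu G)] &
      [/\ mx_RH (Gyv G), mx_RH (Gyd G) & mx_RH (Gyu G)]].

(* Feedback system of G, u = K y and v = Gbar w (d exogenous, z output). *)
Definition fb3_stable (C : numClosedFieldType) nv nd nu nw nz ny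
  (G : subsys C nv nd nu nw nz ny) (Gbar : 'M[tf C]_(nv, nw))
  (K : 'M[tf C]_(nu, ny)) : Prop :=
  lft_stable (Gzd G) (row_mx (Gzv G) (Gzu G)) (col_mx (Gwd G) (Gyd G))
    (block_mx (Gwv G) (Gwu G) (Gyv G) (Gyu G))
    (block_mx Gbar 0 0 K).

Definition retrofit (C : numClosedFieldType) nv nd nu nw nz ny
  (G : subsys C nv nd nu nw nz ny) (K : 'M[tf C]_(nu, ny)) : Prop :=
  forall Gbar : 'M[tf C]_(nv, nw), mx_prr Gbar ->
    loop_stable (Gwv G) Gbar -> fb3_stable G Gbar K.

Definition bdiag (T : nzRingType) (N : nat) (p q : 'I_N -> nat)
  (B : forall i, 'M[T]_(p i, q i)) : 'M[T]_(\sum_i p i, \sum_i q i) :=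
  \mxblock_(i < N, j < N) (if i == j then conform_mx 0 (B i) else 0).

(* The network: stacked subsystems, v = L w, u = diag(K_i) y. *)
Definition network_stable (C : numClosedFieldType) (N : nat)
  (nv nd nu nw nz ny : 'I_N -> nat)
  (G : forall i, subsys C (nv i) (nd i) (nu i) (nw i) (nz i) (ny i))
  (L : 'M[tf C]_(\sum_i nv i, \sum_i nw i))
  (K : forall i, 'M[tf C]_(nu i, ny i)) : Prop :=
  lft_stable (bdiag (fun i => Gzd (G i)))
    (row_mx (bdiag (fun i => Gzv (G i))) (bdiag (fun i => Gzu (G i))))
    (col_mx (bdiag (fun i => Gwd (G i))) (bdiag (fun i => Gyd (G i))))
    (block_mx (bdiag (fun i => Gwv (G i))) (bdiag (fun i => Gwu (G i)))
              (bdiag (fun i => Gyv (G i))) (bdiag (fun i => Gyu (G i))))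
    (block_mx L 0 0 (bdiag K)).

(* Preexisting system: w = diag(G_wv) v, v = L w. *)
Definition pre_stable (C : numClosedFieldType) (N : nat)
  (nv nd nu nw nz ny : 'I_N -> nat)
  (G : forall i, subsys C (nv i) (nd i) (nu i) (nw i) (nz i) (ny i))
  (L : 'M[tf C]_(\sum_i nv i, \sum_i nw i)) : Prop :=
  loop_stable (bdiag (fun i => Gwv (G i))) L.

(* Main.v *)
Require Import Defs.
From HB Require Import structures.
From mathcomp Require Import all_boot all_order all_algebra.
From mathcomp Require Import fraction.
From mathcomp Require Import ring.
Set Implicit Arguments. Unset Strict Implicit. Unset Printing Implicit Defensive.
Import Order.TTheory GRing.Theory Num.Theory.
Local Open Scope ring_scope.


Lemma leq_predD (a b c : nat) : (a <= b)%N -> ((a + c).-1 <= (b + c).-1)%N.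
Proof. by move=> h; rewrite -!subn1 leq_sub2r // leq_add2r. Qed.

Lemma leq_predD' (a b c : nat) : (a <= b)%N -> ((a + c).-1 <= (c + b).-1)%N.
Proof. by move=> h; rewrite [(c + b)%N]addnC; exact: leq_predD. Qed.

Lemma realpolyD (C : numClosedFieldType) (p q : {poly C}) :
  realpoly p -> realpoly q -> realpoly (p + q).
Proof. by move=> hp hq k; rewrite coefD rpredD. Qed.

Lemma realpolyN (C : numClosedFieldType) (p : {poly C}) :
  realpoly p -> realpoly (- p).
Proof. by move=> hp k; rewrite coefN rpredN. Qed.

Lemma realpolyM (C : numClosedFieldType) (p q : {poly C}) :
  realpoly p -> realpoly q -> realpoly (p * q).
Proof. by move=> hp hq k; rewrite coefM rpred_sum // => i _; rewrite rpredM. Qed.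

Lemma realpolyC (C : numClosedFieldType) (c : C) :
  c \is Num.real -> realpoly c%:P.
Proof. by move=> hc k; rewrite coefC; case: ifP. Qed.

Lemma realpolyX (C : numClosedFieldType) : realpoly ('X : {poly C}).
Proof. by move=> k; rewrite coefX; case: (k == 1)%N. Qed.

Lemma tofrac_neq0 (C : numClosedFieldType) (q : {poly C}) :
  q != 0 -> (q%:F : tf C) != 0.
Proof. by rewrite tofrac_eq0. Qed.

Lemma RH0 (C : numClosedFieldType) : RH (0 : tf C).
Proof.
exists 0, 1; split; rewrite ?oner_eq0 ?size_poly0 //.
- by split; [rewrite -[0]/(0%:P : {poly C}) | rewrite -[1]/(1%:P : {poly C})];
    apply: realpolyC; rewrite ?real0 ?real1.
- by move=> z; rewrite (negbTE (root1 z)).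
- by rewrite tofrac0 mul0r.
Qed.

Lemma RH1 (C : numClosedFieldType) : RH (1 : tf C).
Proof.
exists 1, 1; split; rewrite ?oner_eq0 //.
- by split; rewrite -[1]/(1%:P : {poly C}); apply: realpolyC; rewrite real1.
- by move=> z; rewrite (negbTE (root1 z)).
- by rewrite tofrac1 divr1.
Qed.
Lemma RHD (C : numClosedFieldType) (f g : tf C) : RH f -> RH g -> RH (f + g).
Proof.
move=> [p1 [q1 [nq1 [r1 r1'] s1 h1 ->]]] [p2 [q2 [nq2 [r2 r2'] s2 h2 ->]]].
exists (p1 * q2 + p2 * q1), (q1 * q2); split.
- by rewrite mulf_neq0.
- by split; [apply: realpolyD|]; apply: realpolyM.
- apply: leq_trans (size_polyD _ _) _.
  rewrite geq_max (size_mul nq1 nq2).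
  apply/andP; split.
  apply: leq_trans (size_polyMleq _ _) _. exact: leq_predD.
  apply: leq_trans (size_polyMleq _ _) _.
  exact: leq_predD'.
- by move=> z; rewrite rootM => /orP [/h1|/h2].
- rewrite tofracD !tofracM.
  have := tofrac_neq0 nq1.
  have := tofrac_neq0 nq2.
  move=> a b. exact: (addf_div _ _ b a).
Qed.

Lemma RHN (C : numClosedFieldType) (f : tf C) : RH f -> RH (- f).
Proof.
move=> [p1 [q1 [nq1 [r1 r1'] s1 h1 ->]]].
exists (- p1), q1; split => //; first by split => //; apply: realpolyN.
- by rewrite size_polyN.
- by rewrite tofracN mulNr.
Qed.

Lemma RHM (C : numClosedFieldType) (f g : tf C) : RH f -> RH g -> RH (f * g).
Proof.
move=> [p1 [q1 [nq1 [r1 r1'] s1 h1 ->]]] [p2 [q2 [nq2 [r2 r2'] s2 h2 ->]]].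
exists (p1 * p2), (q1 * q2); split.
- by rewrite mulf_neq0.
- by split; apply: realpolyM.
- apply: leq_trans (size_polyMleq _ _) _; rewrite (size_mul nq1 nq2); rewrite -!subn1 leq_sub2r // leq_add //.
- by move=> z; rewrite rootM => /orP [/h1|/h2].
- rewrite !tofracM; have := tofrac_neq0 nq1; have := tofrac_neq0 nq2.
  by move=> a b; exact: mulf_div.
Qed.

Lemma RHB (C : numClosedFieldType) (f g : tf C) : RH f -> RH g -> RH (f - g).
Proof. by move=> hf hg; apply: RHD => //; apply: RHN. Qed.

Lemma RH_sum (C : numClosedFieldType) (I : Type) (r : seq I) (P : pred I)
  (F : I -> tf C) : (forall i, P i -> RH (F i)) -> RH (\sum_(i <- r | P i) F i).
Proof. move=> h; apply: (@big_ind (tf C) (@RH C)); [exact: RH0 | exact: RHD | exact: h]. Qed.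


Lemma mx_RH0 (C : numClosedFieldType) m n : mx_RH (0 : 'M[tf C]_(m, n)).
Proof. by move=> i j; rewrite mxE; exact: RH0. Qed.

Lemma mx_RH1 (C : numClosedFieldType) n : mx_RH (1%:M : 'M[tf C]_n).
Proof. by move=> i j; rewrite mxE; case: (i == j); [rewrite mulr1n; exact: RH1 | exact: RH0]. Qed.

Lemma mx_RHD (C : numClosedFieldType) m n (A B : 'M[tf C]_(m, n)) :
  mx_RH A -> mx_RH B -> mx_RH (A + B).
Proof. by move=> hA hB i j; rewrite mxE; apply: RHD. Qed.

Lemma mx_RHN (C : numClosedFieldType) m n (A : 'M[tf C]_(m, n)) :
  mx_RH A -> mx_RH (- A).
Proof. by move=> hA i j; rewrite mxE; apply: RHN. Qed.

Lemma mx_RHB (C : numClosedFieldType) m n (A B : 'M[tf C]_(m, n)) :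
  mx_RH A -> mx_RH B -> mx_RH (A - B).
Proof. by move=> hA hB; apply: mx_RHD => //; apply: mx_RHN. Qed.

Lemma mx_RHM (C : numClosedFieldType) m n p (A : 'M[tf C]_(m, n)) (B : 'M[tf C]_(n, p)) :
  mx_RH A -> mx_RH B -> mx_RH (A *m B).
Proof. by move=> hA hB i j; rewrite mxE; apply: RH_sum => k _; apply: RHM. Qed.

Lemma mx_RH_row (C : numClosedFieldType) m n1 n2 (A : 'M[tf C]_(m, n1)) (B : 'M[tf C]_(m, n2)) :
  mx_RH A -> mx_RH B -> mx_RH (row_mx A B).
Proof. by move=> hA hB i j; rewrite mxE; case: (split j). Qed.

Lemma mx_RH_col (C : numClosedFieldType) m1 m2 n (A : 'M[tf C]_(m1, n)) (B : 'M[tf C]_(m2, n)) :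
  mx_RH A -> mx_RH B -> mx_RH (col_mx A B).
Proof. by move=> hA hB i j; rewrite mxE; case: (split i). Qed.

Lemma mx_RH_block (C : numClosedFieldType) m1 m2 n1 n2 (A : 'M[tf C]_(m1, n1))
  (B : 'M[tf C]_(m1, n2)) (D : 'M[tf C]_(m2, n1)) (E : 'M[tf C]_(m2, n2)) :
  mx_RH A -> mx_RH B -> mx_RH D -> mx_RH E -> mx_RH (block_mx A B D E).
Proof. by move=> *; apply: mx_RH_col; apply: mx_RH_row. Qed.

Lemma mx_RH_ul (C : numClosedFieldType) m1 m2 n1 n2 (T : 'M[tf C]_(m1 + m2, n1 + n2)) :
  mx_RH T -> [/\ mx_RH (ulsubmx T), mx_RH (ursubmx T), mx_RH (dlsubmx T) & mx_RH (drsubmx T)].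
Proof. by move=> h; split=> i j; rewrite !mxE. Qed.

Definition Phi (C : numClosedFieldType) a b (P : 'M[tf C]_(a, b)) (K : 'M[tf C]_(b, a)) :=
  exists T : 'M[tf C]_(b, a), mx_RH T /\ (1%:M - K *m P) *m T = K.

Lemma Phi_inv (C : numClosedFieldType) a b (P : 'M[tf C]_(a, b)) (K : 'M[tf C]_(b, a)) T :
  (1%:M - K *m P) *m T = K ->
  (1%:M - K *m P) \in unitmx /\ invmx (1%:M - K *m P) *m K = T.
Proof.
move=> hT.
have e : (1%:M - K *m P) *m (1%:M + T *m P) = 1%:M.
  by rewrite mulmxDr mulmx1 mulmxA hT subrK.
have [u _] := mulmx1_unit e.
by split=> //; rewrite -[X in _ *m X = _]hT mulKmx.
Qed.

Lemma Phi_unit (C : numClosedFieldType) a b (P : 'M[tf C]_(a, b)) (K : 'M[tf C]_(b, a)) :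
  (1%:M - K *m P) \in unitmx -> (1%:M - K *m P) *m (invmx (1%:M - K *m P) *m K) = K.
Proof. by move=> u; rewrite mulmxA mulmxV // mul1mx. Qed.

Lemma loop_stable_Phi (C : numClosedFieldType) a b (P : 'M[tf C]_(a, b)) (K : 'M[tf C]_(b, a)) :
  mx_RH P -> (loop_stable P K <-> Phi P K).
Proof.
move=> hP; rewrite /loop_stable /=; split.
  by move=> [u _ h _ _]; exists (invmx (1%:M - K *m P) *m K); split => //; exact: Phi_unit.
move=> [T [hT eT]]; have [u e] := Phi_inv eT.
rewrite -(mulmxA P) e; split => //.
- exact: mx_RHM.
- by apply: mx_RHD => //; apply: mx_RHM => //; apply: mx_RHM.
- exact: mx_RHM.
Qed.

Lemma lft_stable_Phi (C : numClosedFieldType) (nz nd ny nu : nat)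
  (P11 : 'M[tf C]_(nz, nd)) (P12 : 'M[tf C]_(nz, nu))
  (P21 : 'M[tf C]_(ny, nd)) (P22 : 'M[tf C]_(ny, nu))
  (K : 'M[tf C]_(nu, ny)) :
  mx_RH P11 -> mx_RH P12 -> mx_RH P21 -> mx_RH P22 ->
  (lft_stable P11 P12 P21 P22 K <-> Phi P22 K).
Proof.
move=> h11 h12 h21 h22; rewrite /lft_stable /=; split.
  by move=> [u [_ _ h] _ _]; exists (invmx (1%:M - K *m P22) *m K); split => //; exact: Phi_unit.
move=> [T [hT eT]]; have [u e] := Phi_inv eT.
rewrite -!(mulmxA P22) -!(mulmxA P12) e; split => //.
- by split => //; apply: mx_RHM.
- split; first (by apply: mx_RHD => //; apply: mx_RHM => //; apply: mx_RHM);
    last by apply: mx_RHM.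
  by apply: mx_RHD => //; apply: mx_RHM => //; apply: mx_RHM.
- split; first (by apply: mx_RHD => //; apply: mx_RHM => //; apply: mx_RHM);
    last by apply: mx_RHM.
  by apply: mx_RHD => //; apply: mx_RHM => //; apply: mx_RHM.
Qed.


Lemma DM_block (R : comUnitRingType) nv nu nw ny
  (A : 'M[R]_(nw, nv)) (B : 'M[R]_(nw, nu)) (Cc : 'M[R]_(ny, nv)) (E : 'M[R]_(ny, nu))
  (G : 'M[R]_(nv, nw)) (K : 'M[R]_(nu, ny)) :
  1%:M - block_mx G 0 0 K *m block_mx A B Cc E =
  block_mx (1%:M - G *m A) (- (G *m B)) (- (K *m Cc)) (1%:M - K *m E).
Proof.
rewrite mulmx_block !mul0mx addr0 add0r [1%:M]scalar_mx_block opp_block_mx add_block_mx.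
by rewrite ?sub0r !addr0 !add0r.
Qed.

Lemma fb3_T (R : comUnitRingType) nv nu nw ny
  (A : 'M[R]_(nw, nv)) (B : 'M[R]_(nw, nu)) (Cc : 'M[R]_(ny, nv)) (E : 'M[R]_(ny, nu))
  (G : 'M[R]_(nv, nw)) (K : 'M[R]_(nu, ny)) Q X :
  (1%:M - K *m E) *m Q = K -> (1%:M - G *m (A + B *m Q *m Cc)) *m X = G ->
  (1%:M - block_mx G 0 0 K *m block_mx A B Cc E) *m
    block_mx X (X *m B *m Q) (Q *m Cc *m X) (Q + Q *m Cc *m X *m B *m Q) =
  block_mx G 0 0 K.
Proof.
move=> hQ hX; rewrite DM_block mulmx_block.
have e11 : (1%:M - G *m A) *m X + - (G *m B) *m (Q *m Cc *m X) = G.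
  apply: (etrans _ hX); rewrite !mulmxA -mulmxDl; congr (_ *m X).
  by rewrite mulmxDr opprD addrA !mulmxA !mulNmx.
have e12 : (1%:M - G *m A) *m (X *m B *m Q) + - (G *m B) *m (Q + Q *m Cc *m X *m B *m Q) = 0.
  rewrite mulmxDr addrCA.
  have -> : (1%:M - G *m A) *m (X *m B *m Q) + - (G *m B) *m (Q *m Cc *m X *m B *m Q)
     = ((1%:M - G *m A) *m X + - (G *m B) *m (Q *m Cc *m X)) *m B *m Q.
    by apply/esym; rewrite -(mulmxA _ B Q) (mulmxDl _ _ (B *m Q)) -!mulmxA.
  by rewrite e11 mulNmx addNr.
have e21 : - (K *m Cc) *m X + (1%:M - K *m E) *m (Q *m Cc *m X) = 0.
  by rewrite !mulmxA hQ mulNmx addNr.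
have e22 : - (K *m Cc) *m (X *m B *m Q) + (1%:M - K *m E) *m (Q + Q *m Cc *m X *m B *m Q) = K.
  by rewrite mulmxDr !mulmxA hQ addrCA !mulNmx addNr addr0.
by rewrite e11 e12 e21 e22.
Qed.

Lemma unit_inv (R : comUnitRingType) a b (P : 'M[R]_(a, b)) (K : 'M[R]_(b, a)) T :
  (1%:M - K *m P) *m T = K ->
  (1%:M - K *m P) \in unitmx /\ invmx (1%:M - K *m P) *m K = T.
Proof.
move=> hT.
have e : (1%:M - K *m P) *m (1%:M + T *m P) = 1%:M.
  by rewrite mulmxDr mulmx1 mulmxA hT subrK.
have [u _] := mulmx1_unit e.
by split=> //; rewrite -[X in _ *m X = _]hT mulKmx.
Qed.

Lemma fb3_nec_alg (R : comUnitRingType) nv nu nw ny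
  (A : 'M[R]_(nw, nv)) (B : 'M[R]_(nw, nu)) (Cc : 'M[R]_(ny, nv)) (E : 'M[R]_(ny, nu))
  (G : 'M[R]_(nv, nw)) (K : 'M[R]_(nu, ny)) Q T :
  (1%:M - K *m E) *m Q = K ->
  (1%:M - block_mx G 0 0 K *m block_mx A B Cc E) *m T = block_mx G 0 0 K ->
  (1%:M - G *m (A + B *m Q *m Cc)) *m ulsubmx T = G.
Proof.
move=> hQ; rewrite -{1}(submxK T) DM_block mulmx_block => /eq_block_mx [e11 _ e21 _].
have [u iq] := unit_inv hQ.
have h21 : dlsubmx T = Q *m Cc *m ulsubmx T.
  have : (1%:M - K *m E) *m dlsubmx T = K *m Cc *m ulsubmx T.
    by move/eqP: e21; rewrite addrC addr_eq0 mulNmx opprK => /eqP.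
  by move=> h; rewrite -(mulKmx u (dlsubmx T)) h !mulmxA iq.
apply: (etrans _ e11); rewrite h21 !mulmxA -mulmxDl; congr (_ *m _).
by rewrite mulmxDr opprD addrA !mulmxA !mulNmx.
Qed.

Lemma fb3_nec1_alg (R : comUnitRingType) nv nu nw ny
  (A : 'M[R]_(nw, nv)) (B : 'M[R]_(nw, nu)) (Cc : 'M[R]_(ny, nv)) (E : 'M[R]_(ny, nu))
  (K : 'M[R]_(nu, ny)) (T : 'M[R]_(nv + nu, nw + ny)) :
  (1%:M - block_mx 0 0 0 K *m block_mx A B Cc E) *m T = block_mx 0 0 0 K ->
  (1%:M - K *m E) *m drsubmx T = K.
Proof.
rewrite -{1}(submxK T) DM_block mulmx_block => /eq_block_mx [_ e12 _ e22].
move: e12; rewrite !mul0mx subr0 oppr0 mul0mx addr0 mul1mx => e12.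
by move: e22; rewrite e12 mulmx0 add0r.
Qed.


Lemma fid1 (F : fieldType) (cc u Qa P : F) : u != 0 -> Qa != 0 -> u * Qa + cc * P != 0 ->
  cc / u * (1 - cc * Qa / (u * Qa + cc * P) * (P / Qa)) = cc * Qa / (u * Qa + cc * P).
Proof. move=> hu hq hd. field. by rewrite hu hq hd. Qed.

Lemma fid2 (F : fieldType) (cc u Qa P Pd Qd Pz Qz : F) :
  u != 0 -> Qa != 0 -> Qd != 0 -> Qz != 0 -> u * Qa + cc * P != 0 ->
  Pz / Qz * (1 - cc * Qa / (u * Qa + cc * P) * (P / Qa + Pd / Qd)) =
    cc * Qa / (u * Qa + cc * P) ->
  Pz * (u * Qd - cc * Pd) = cc * Qz * Qd.
Proof.
move=> hu hq hd hz hden h.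
have e1 : Pz * (u * Qd - cc * Pd) =
   (Pz / Qz * (1 - cc * Qa / (u * Qa + cc * P) * (P / Qa + Pd / Qd))) *
   (Qz * Qd * (u * Qa + cc * P) / Qa).
  field; by rewrite hq hd hz hden.
rewrite e1 h; field; by rewrite hq hden.
Qed.

Lemma fid3 (F : fieldType) (s pd qd : F) : pd != 0 -> qd != 0 ->
  s / (pd / qd) * pd = s * qd.
Proof. move=> h1 h2; field; by rewrite h1 h2. Qed.

Lemma solve1 (R : comNzRingType) (z g a : R) : z = g + g * (a * z) -> z * (1 - g * a) = g.
Proof. move=> h; rewrite mulrBr mulr1 {1}h; ring. Qed.

Lemma solve2 (R : comNzRingType) (x g a : R) : x * (1 - g * a) = g -> x = g + g * (a * x).
Proof. move=> h; rewrite -{1}h; ring. Qed.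

Lemma exists_nonroot (C : numClosedFieldType) (p : {poly C}) :
  p != 0 -> exists n : nat, ~~ root p n%:R.
Proof.
move=> np; case: (boolP [exists i : 'I_(size p), ~~ root p (i : nat)%:R]).
  by move=> /existsP [i hi]; exists i.
move=> /existsPn h; exfalso.
have H := @max_poly_roots _ p [seq (i : nat)%:R | i <- iota 0 (size p)] np.
rewrite size_map size_iota ltnn in H.
suff : false by []. apply: H.
- apply/allP => x /mapP [i]; rewrite mem_iota add0n => /andP [_ hi] ->.
  by have := h (Ordinal hi); rewrite negbK.
- by rewrite map_inj_uniq ?iota_uniq // => x y /eqP; rewrite eqr_nat => /eqP ->.
Qed.

Lemma horner_real (C : numClosedFieldType) (p : {poly C}) (x : C) :
  realpoly p -> x \is Num.real -> p.[x] \is Num.real.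
Proof.
move=> hp hx; rewrite horner_coef rpred_sum // => i _.
by rewrite rpredM // rpredX.
Qed.

Lemma frac_poly_eq (C : numClosedFieldType) (p q : {poly C}) :
  (p%:F : tf C) = q%:F -> p = q.
Proof. by move/eqP; rewrite tofrac_eq => /eqP. Qed.


Lemma destab_scalar (C : numClosedFieldType) (a d : tf C) : RH a -> RH d -> d != 0 ->
  exists g, [/\ prr g, exists x, RH x /\ x * (1 - g * a) = g &
     forall z, RH z -> z * (1 - g * (a + d)) <> g].
Proof.
move=> [pa [qa [nqa [rpa rqa] sa ha ea]]] [pd [qd [nqd [rpd rqd] sd hd ed]]] nd.
have npd : pd != 0.
  apply/negP => /eqP e; move: nd; rewrite ed e tofrac0 mul0r eqxx //.
have [n hn] := exists_nonroot npd.
set s0 : C := n%:R.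
have s0r : s0 \is Num.real by rewrite /s0 realn.
have Res0 : 'Re s0 = s0 by apply/Creal_ReP.
have s0ge : 0 <= s0 by rewrite /s0 ler0n.
have qd0 : qd.[s0] != 0.
  apply/negP => /eqP h0; have := hd s0; rewrite rootE h0 eqxx Res0.
  by move=> /(_ isT) /(le_lt_trans s0ge); rewrite ltxx.
have pd0 : pd.[s0] != 0 by move: hn; rewrite rootE.
set dv := pd.[s0] / qd.[s0].
set c := (s0 + 1) / dv.
have s1 : s0 + 1 != 0 by rewrite /s0 -[1 : C]/(1%:R) -natrD pnatr_eq0 addn1.
have cnz : c != 0 by rewrite /c /dv mulf_neq0 // invr_neq0 // mulf_neq0 // invr_neq0.
have pdr := horner_real rpd s0r.
have qdr := horner_real rqd s0r.
have cr : c \is Num.real.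
  by rewrite /c /dv realM ?realD ?real1 // realV realM // realV.
set u : {poly C} := 'X + (1 : C)%:P.
have su : size u = 2 := size_XaddC _.
have nu : u != 0 by rewrite -size_poly_eq0 su.
set cp : {poly C} := c%:P.
set den : {poly C} := u * qa + cp * pa.
have sden : size den = (size qa).+1.
  have h1 : size (u * qa) = (size qa).+1 by rewrite (size_mul nu nqa) su.
  have h2 : (size (cp * pa)%R <= size qa)%N.
    apply: leq_trans (size_polyMleq _ _) _; rewrite -subn1 leq_subLR.
    exact: leq_add (size_polyC_leq1 c) sa.
  by rewrite /den size_polyDl h1 // ltnS.
have nden : den != 0 by rewrite -size_poly_eq0 sden.
have hden : (u%:F * qa%:F + cp%:F * pa%:F : tf C) != 0.
  by rewrite -!tofracM -tofracD tofrac_eq0.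
have ru : realpoly u by apply: realpolyD; [exact: realpolyX | apply: realpolyC; exact: real1].
have rcp : realpoly cp by exact: realpolyC.
exists (cp%:F * qa%:F / (u%:F * qa%:F + cp%:F * pa%:F)); split.
- exists (cp * qa), den; split => //.
  + exact: realpolyM.
  + by apply: realpolyD; apply: realpolyM.
  + rewrite sden; apply: leq_trans (size_polyMleq _ _) _; rewrite -subn1 leq_subLR.
    exact: leq_add (size_polyC_leq1 c) (leqnSn _).
  + by rewrite -!tofracM -tofracD.
- exists (cp%:F / u%:F); split.
  + exists cp, u; split => //.
    * by rewrite su; apply: leq_trans (size_polyC_leq1 c) _.
    * move=> z; rewrite rootE /u !hornerE addr_eq0 => /eqP ->.
      have -> : 'Re (-1 : C) = -1 by apply/Creal_ReP; rewrite rpredN real1.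
      by rewrite oppr_lt0 ltr01.
  + rewrite ea.
    have := @fid1 (tf C) cp%:F u%:F qa%:F pa%:F (tofrac_neq0 nu) (tofrac_neq0 nqa) hden.
    move=> h.
    exact h.
- move=> z [pz [qz [nqz _ _ hz ez]]] hE.
  rewrite ea ed ez in hE.
  have qz0 : qz.[s0] != 0.
    apply/negP => /eqP h0; have := hz s0; rewrite rootE h0 eqxx Res0.
    by move=> /(_ isT) /(le_lt_trans s0ge); rewrite ltxx.
  have := fid2 (tofrac_neq0 nu) (tofrac_neq0 nqa) (tofrac_neq0 nqd) (tofrac_neq0 nqz) hden hE.
  rewrite -!tofracM -tofracB -tofracM => /frac_poly_eq /(congr1 (fun p => p.[s0])).
  rewrite !hornerE.
  have -> : c * pd.[s0] = (s0 + 1) * qd.[s0] by rewrite /c /dv fid3.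
  rewrite subrr mulr0 => /esym/eqP.
  rewrite !mulf_eq0 invr_eq0 /dv mulf_eq0 invr_eq0 (negbTE s1) (negbTE pd0) (negbTE qz0) (negbTE qd0).
  by [].
Qed.


Lemma prr0 (C : numClosedFieldType) : prr (0 : tf C).
Proof.
exists 0, 1; split; rewrite ?oner_eq0 ?size_poly0 //.
- by rewrite -[0]/(0%:P : {poly C}); apply: realpolyC; rewrite real0.
- by rewrite -[1]/(1%:P : {poly C}); apply: realpolyC; rewrite real1.
- by rewrite tofrac0 mul0r.
Qed.

Lemma mx_prr0 (C : numClosedFieldType) m n : mx_prr (0 : 'M[tf C]_(m, n)).
Proof. by move=> i j; rewrite mxE; exact: prr0. Qed.

Lemma mxE_add (R : nmodType) m n (A B : 'M[R]_(m, n)) i j : (A + B) i j = A i j + B i j.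
Proof. by rewrite mxE. Qed.

Lemma mxE_scale (R : pzSemiRingType) m n a (A : 'M[R]_(m, n)) i j : (a *: A) i j = a * A i j.
Proof. by rewrite mxE. Qed.

Lemma mxE_delta (R : pzSemiRingType) m n (l : 'I_m) (k : 'I_n) i j :
  (delta_mx l k : 'M[R]_(m, n)) i j = ((i == l) && (j == k))%:R.
Proof. by rewrite mxE. Qed.

Lemma deltaM_entry (R : pzSemiRingType) m n p (l : 'I_n) (k : 'I_m) (M : 'M[R]_(m, p)) i j :
  (delta_mx l k *m M) i j = (i == l)%:R * M k j.
Proof.
rewrite mxE (bigD1 k) //= mxE eqxx andbT big1 ?addr0 // => s /negbTE hs.
by rewrite mxE hs andbF mul0r.
Qed.

Lemma Mdelta_entry (R : pzSemiRingType) m n p (l : 'I_n) (k : 'I_m) (M : 'M[R]_(p, n)) i j :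
  (M *m delta_mx l k) i j = M i l * (j == k)%:R.
Proof.
rewrite mxE (bigD1 l) //= mxE eqxx big1 ?addr0 // => s /negbTE hs.
by rewrite mxE hs mulr0.
Qed.

Lemma delta_Phi (R : comNzRingType) m n (A : 'M[R]_(m, n)) (k : 'I_m) (l : 'I_n) (g x : R) :
  x * (1 - g * A k l) = g ->
  (1%:M - (g *: delta_mx l k) *m A) *m (x *: delta_mx l k) = g *: delta_mx l k.
Proof.
move=> h; have e := solve2 h.
apply/eqP; rewrite mulmxBl mul1mx subr_eq; apply/eqP.
rewrite -mulmxA -scalemxAl -scalemxAr.
apply/matrixP => i j.
rewrite mxE_add !mxE_scale deltaM_entry mxE_scale Mdelta_entry !mxE_delta.
case: (i == l); case: (j == k); rewrite /= ?mulr1 ?mul1r ?mulr0 ?mul0r ?addr0 //.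
  by rewrite [x * _]mulrC.
by rewrite mulr0 addr0.
Qed.

Lemma delta_Phi_inv (R : comNzRingType) m n (A : 'M[R]_(m, n)) (k : 'I_m) (l : 'I_n) (g : R)
  (Z : 'M[R]_(n, m)) :
  (1%:M - (g *: delta_mx l k) *m A) *m Z = g *: delta_mx l k -> Z l k * (1 - g * A k l) = g.
Proof.
rewrite mulmxBl mul1mx => /eqP; rewrite subr_eq => /eqP hZ.
rewrite -mulmxA -scalemxAl in hZ.
have hrow : forall i j, i != l -> Z i j = 0.
  move=> i j /negbTE hi; rewrite hZ mxE_add !mxE_scale deltaM_entry mxE_delta hi /=.
  by rewrite !mul0r mulr0 addr0.
have hkk : (A *m Z) k k = A k l * Z l k.
  rewrite mxE (bigD1 l) //= big1 ?addr0 // => s hs.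
  by rewrite hrow // mulr0.
apply: solve1; have := congr1 (fun M : 'M[R]_(n, m) => M l k) hZ.
by rewrite /= mxE_add !mxE_scale deltaM_entry mxE_delta !eqxx /= hkk mulr1 mul1r.
Qed.

Lemma destab (C : numClosedFieldType) m n (A D : 'M[tf C]_(m, n)) :
  mx_RH A -> mx_RH D -> D != 0 ->
  exists Gb : 'M[tf C]_(n, m), [/\ mx_prr Gb, Phi A Gb & ~ Phi (A + D) Gb].
Proof.
move=> hA hD nD.
have [k [l hkl]] : exists k l, D k l != 0.
  case: (boolP [exists k, exists l, D k l != 0]) => [/existsP [k /existsP [l h]]|/existsPn h].
    by exists k, l.
  exfalso; move/eqP: nD; apply; apply/matrixP => i j; rewrite [RHS]mxE; apply/eqP.
  by have /existsPn/(_ j) := h i; rewrite negbK.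
have [g [pg [x [hx ex]] ng]] := destab_scalar (hA k l) (hD k l) hkl.
exists (g *: delta_mx l k); split.
- move=> i j; rewrite !mxE; case: (_ && _).
    by rewrite mulr1.
  by rewrite mulr0; exact: prr0.
- exists (x *: delta_mx l k); split.
    move=> i j; rewrite !mxE; case: (_ && _).
      by rewrite mulr1.
    by rewrite mulr0; exact: RH0.
  exact: delta_Phi.
- move=> [Z [hZ eZ]]; apply: (ng (Z l k) (hZ l k)).
  by have := delta_Phi_inv eZ; rewrite mxE.
Qed.


Definition Yq (C : numClosedFieldType) nv nd nu nw nz ny
  (G : subsys C nv nd nu nw nz ny) (K : 'M[tf C]_(nu, ny)) (Q : 'M[tf C]_(nu, ny)) :=
  [/\ mx_RH Q, (1%:M - K *m Gyu G) *m Q = K & Gwu G *m Q *m Gyv G = 0].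

Lemma fb3_Phi (C : numClosedFieldType) nv nd nu nw nz ny
  (G : subsys C nv nd nu nw nz ny) Gb K : subsys_RH G ->
  (fb3_stable G Gb K <-> Phi (block_mx (Gwv G) (Gwu G) (Gyv G) (Gyu G)) (block_mx Gb 0 0 K)).
Proof.
case=> [[h1 h2 h3] [h4 h5 h6] [h7 h8 h9]]; apply: lft_stable_Phi => //.
- exact: mx_RH_row.
- exact: mx_RH_col.
- exact: mx_RH_block.
Qed.

Lemma retrofit_char (C : numClosedFieldType) nv nd nu nw nz ny
  (G : subsys C nv nd nu nw nz ny) K : subsys_RH G ->
  (retrofit G K <-> exists Q, Yq G K Q).
Proof.
move=> hG; have hG' := hG; case: hG' => [[h1 h2 h3] [h4 h5 h6] [h7 h8 h9]].
split.
- move=> H.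
  have st0 : loop_stable (Gwv G) 0.
    apply/loop_stable_Phi => //; exists 0; split; [exact: mx_RH0 | by rewrite mulmx0].
  have /(fb3_Phi _ _ hG) [T [hT eT]] := H 0 (@mx_prr0 _ _ _) st0.
  have eQ := fb3_nec1_alg eT.
  have [_ _ _ hQ] := mx_RH_ul hT.
  exists (drsubmx T); split => //.
  case: (eqVneq (Gwu G *m drsubmx T *m Gyv G) 0) => // hne.
  have hD : mx_RH (Gwu G *m drsubmx T *m Gyv G) by apply: mx_RHM => //; apply: mx_RHM.
  have [Gb [pGb sGb nGb]] := destab h1 hD hne.
  have /(fb3_Phi _ _ hG) [T' [hT' eT']] := H Gb pGb (proj2 (loop_stable_Phi _ h1) sGb).
  exfalso; apply: nGb; exists (ulsubmx T'); split; first by case: (mx_RH_ul hT').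
  exact: fb3_nec_alg eQ eT'.
- move=> [Q [hQ eQ zQ]] Gb pGb /(loop_stable_Phi _ h1) [X [hX eX]].
  apply/(fb3_Phi _ _ hG).
  exists (block_mx X (X *m Gwu G *m Q) (Q *m Gyv G *m X) (Q + Q *m Gyv G *m X *m Gwu G *m Q)).
  split.
    apply: mx_RH_block; do ?[apply: mx_RHD|apply: mx_RHM] => //.
  by apply: fb3_T => //; rewrite zQ addr0.
Qed.


Lemma bdiagK (T : nzRingType) (N : nat) (p q : 'I_N -> nat)
  (B : forall i, 'M[T]_(p i, q i)) i j :
  submxblock (bdiag B) i j = if i == j then conform_mx 0 (B i) else 0.
Proof. by rewrite /bdiag mxblockK. Qed.

Lemma bdiag_mull (T : nzRingType) (N : nat) (p q : 'I_N -> nat) (M : nat) (r : 'I_M -> nat)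
  (B : forall i, 'M[T]_(p i, q i)) (Y : 'M[T]_(\sum_i q i, \sum_k r k)) i j :
  submxblock (bdiag B *m Y) i j = B i *m submxblock Y i j.
Proof.
rewrite -[Y]submxblockK /bdiag mul_mxblock !mxblockK.
rewrite (bigD1 i) //= eqxx conform_mx_id big1 ?addr0 // => k; rewrite eq_sym => /negbTE ->.
by rewrite mul0mx.
Qed.

Lemma bdiag_mulr (T : nzRingType) (N : nat) (p q : 'I_N -> nat) (M : nat) (r : 'I_M -> nat)
  (B : forall i, 'M[T]_(p i, q i)) (Y : 'M[T]_(\sum_k r k, \sum_i p i)) i j :
  submxblock (Y *m bdiag B) i j = submxblock Y i j *m B j.
Proof.
rewrite -[Y]submxblockK /bdiag mul_mxblock !mxblockK.
rewrite (bigD1 j) //= eqxx conform_mx_id big1 ?addr0 // => k /negbTE ->.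
by rewrite mulmx0.
Qed.

Lemma mx_RH_conform (C : numClosedFieldType) m n m' n' (A : 'M[tf C]_(m, n)) :
  mx_RH A -> mx_RH (conform_mx (0 : 'M[tf C]_(m', n')) A).
Proof.
move=> hA; rewrite /conform_mx; case: eqP => e1; last exact: mx_RH0.
case: eqP => e2; last exact: mx_RH0.
by move=> i j; rewrite castmxE.
Qed.

Lemma mx_RH_bdiag (C : numClosedFieldType) (N : nat) (p q : 'I_N -> nat)
  (B : forall i, 'M[tf C]_(p i, q i)) :
  (forall i, mx_RH (B i)) -> mx_RH (bdiag B).
Proof.
move=> h k l; rewrite /bdiag mxE; case: ifP => _; last by rewrite mxE; exact: RH0.
exact: mx_RH_conform.
Qed.

Lemma mx_RH_submxblock (C : numClosedFieldType) (N M : nat) (p : 'I_N -> nat) (q : 'I_M -> nat)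
  (Y : 'M[tf C]_(\sum_i p i, \sum_j q j)) i j :
  mx_RH Y -> mx_RH (submxblock Y i j).
Proof. by move=> h k l; rewrite !mxE. Qed.

Definition Gstack (C : numClosedFieldType) (N : nat)
  (nv nd nu nw nz ny : 'I_N -> nat)
  (G : forall i, subsys C (nv i) (nd i) (nu i) (nw i) (nz i) (ny i)) :=
  @Subsys C (\sum_i nv i) (\sum_i nd i) (\sum_i nu i) (\sum_i nw i) (\sum_i nz i) (\sum_i ny i)
    (bdiag (fun i => Gwv (G i))) (bdiag (fun i => Gwd (G i))) (bdiag (fun i => Gwu (G i)))
    (bdiag (fun i => Gzv (G i))) (bdiag (fun i => Gzd (G i))) (bdiag (fun i => Gzu (G i)))
    (bdiag (fun i => Gyv (G i))) (bdiag (fun i => Gyd (G i))) (bdiag (fun i => Gyu (G i))).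

Lemma net_retrofit (C : numClosedFieldType) (N : nat)
  (nv nd nu nw nz ny : 'I_N -> nat)
  (G : forall i, subsys C (nv i) (nd i) (nu i) (nw i) (nz i) (ny i))
  (K : forall i, 'M[tf C]_(nu i, ny i)) :
  (forall L : 'M[tf C]_(\sum_i nv i, \sum_i nw i),
      mx_prr L -> pre_stable G L -> network_stable G L K)
  <-> retrofit (Gstack G) (bdiag K).
Proof. by []. Qed.

Lemma Gstack_RH (C : numClosedFieldType) (N : nat)
  (nv nd nu nw nz ny : 'I_N -> nat)
  (G : forall i, subsys C (nv i) (nd i) (nu i) (nw i) (nz i) (ny i)) :
  (forall i, subsys_RH (G i)) -> subsys_RH (Gstack G).
Proof.
move=> h; split; split; apply: mx_RH_bdiag => i; have [[? ? ?] [? ? ?] [? ? ?]] := h i; done.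
Qed.

Lemma Yq_stack (C : numClosedFieldType) (N : nat)
  (nv nd nu nw nz ny : 'I_N -> nat)
  (G : forall i, subsys C (nv i) (nd i) (nu i) (nw i) (nz i) (ny i))
  (K : forall i, 'M[tf C]_(nu i, ny i)) :
  (exists Q, Yq (Gstack G) (bdiag K) Q) <-> (forall i, exists Q, Yq (G i) (K i) Q).
Proof.
split.
- move=> [Q [hQ eQ zQ]] i; exists (submxblock Q i i); split.
  + exact: mx_RH_submxblock.
  + have := congr1 (fun M => submxblock M i i) eQ => /=.
    rewrite mulmxBl mul1mx submxblockB -mulmxA !bdiag_mull bdiagK eqxx conform_mx_id.
    by rewrite mulmxBl mul1mx mulmxA.
  + have := congr1 (fun M => submxblock M i i) zQ => /=.
    by rewrite bdiag_mulr bdiag_mull submxblock0.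
- move=> h; have [Q hQ] := fin_all_exists h.
  exists (bdiag Q); split.
  + by apply: mx_RH_bdiag => i; case: (hQ i).
  + apply/mxblockP => i j.
    rewrite mulmxBl mul1mx submxblockB -mulmxA !bdiag_mull !bdiagK.
    case: eqVneq => [<-|_]; last by rewrite !mulmx0 subr0.
    by rewrite !conform_mx_id; case: (hQ i) => _ + _; rewrite mulmxBl mul1mx mulmxA.
  + apply/mxblockP => i j.
    rewrite bdiag_mulr bdiag_mull bdiagK submxblock0.
    case: eqVneq => [<-|_]; last by rewrite mulmx0 mul0mx.
    by rewrite conform_mx_id; case: (hQ i).
Qed.


Lemma Yq_form (C : numClosedFieldType) nv nd nu nw nz ny
  (G : subsys C nv nd nu nw nz ny) (K : 'M[tf C]_(nu, ny)) :
  (exists Q, Yq G K Q) <->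
  (exists Q : 'M[tf C]_(nu, ny),
      [/\ mx_RH Q, (1%:M + Q *m Gyu G) \in unitmx,
          K = invmx (1%:M + Q *m Gyu G) *m Q &
          Gwu G *m Q *m Gyv G = 0]).
Proof.
split.
- move=> [Q [hQ eQ zQ]]; exists Q.
  have e : (1%:M - K *m Gyu G) *m (1%:M + Q *m Gyu G) = 1%:M.
    by rewrite mulmxDr mulmx1 mulmxA eQ subrK.
  have [_ u] := mulmx1_unit e.
  split => //.
  rewrite -[X in X = _]eQ; congr (_ *m Q).
  by have := congr1 (mulmx^~ (invmx (1%:M + Q *m Gyu G))) e; rewrite /= mulmxK // mul1mx.
- move=> [Q [hQ u eK zQ]]; exists Q; split => //.
  have hK : (1%:M + Q *m Gyu G) *m K = Q by rewrite eK mulKVmx.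
  have e : (1%:M + Q *m Gyu G) *m (1%:M - K *m Gyu G) = 1%:M.
    by rewrite mulmxBr mulmx1 mulmxA hK addrK.
  have -> : 1%:M - K *m Gyu G = invmx (1%:M + Q *m Gyu G).
    by rewrite -[LHS](mulKmx u) e mulmx1.
  by rewrite eK.
Qed.

Unset Implicit Arguments.

Theorem theorem3 (C : numClosedFieldType) (N : nat)
  (nv nd nu nw nz ny : 'I_N -> nat)
  (G : forall i, subsys C (nv i) (nd i) (nu i) (nw i) (nz i) (ny i))
  (K : forall i, 'M[tf C]_(nu i, ny i)) :
  (forall i, subsys_RH (G i)) ->
  (forall i, mx_prr (K i)) ->
  ((forall L : 'M[tf C]_(\sum_i nv i, \sum_i nw i),
      mx_prr L -> pre_stable G L -> network_stable G L K)
   <-> (forall i, retrofit (G i) (K i)))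
  /\
  ((forall i, retrofit (G i) (K i)) <->
   (forall i, exists Q : 'M[tf C]_(nu i, ny i),
      [/\ mx_RH Q, (1%:M + Q *m Gyu (G i)) \in unitmx,
          K i = invmx (1%:M + Q *m Gyu (G i)) *m Q &
          Gwu (G i) *m Q *m Gyv (G i) = 0])).
Proof.
move=> hG _.
have ch i := retrofit_char (K i) (hG i).
have eq2 : (forall i, retrofit (G i) (K i)) <-> (forall i, exists Q, Yq (G i) (K i) Q).
  by split=> h i; apply/ch.
split.
- apply: iff_trans (net_retrofit G K) _.
  apply: iff_trans (retrofit_char _ (Gstack_RH hG)) _.
  apply: iff_trans (Yq_stack G K) _.
  by apply: iff_sym.
- apply: iff_trans eq2 _.
  by split=> h i; apply/Yq_form; apply: h.
Qed.
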